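(* Let $A,B\in\mathbb{C}^{n\times n}$ and let $C=A+B$. Then \[\mathcal{I}(C)\geq \mathcal{I}(A)-\operatorname{rank}(B)\cdot|\Lambda(A)|.\]
   Context: For $M\in\mathbb{C}^{n\times n}$, $\Lambda(M)$ denotes the set of distinct eigenvalues of $M$ and $|\cdot|$ the cardinality of a set. For $\lambda\in\Lambda(M)$, $m_g(M,\lambda)$ denotes the geometric multiplicity of $\lambda$ (dimension of the eigenspace). The derogatory index of $M$ is $\mathcal{I}(M):=\sum_{\lambda\in\Lambda(M)}\big(m_g(M,\lambda)-1\big)$. *)

(* Defs.v *)
From HB Require Import structures.
From mathcomp Require Import all_boot all_order all_algebra.
From mathcomp Require Import complex Rstruct.
From Stdlib Require Import Reals ClassicalEpsilon.
Set Implicit Arguments. Unset Strict Implicit. Unset Printing Implicit Defensive.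
Import GRing.Theory Num.Theory.
Local Open Scope ring_scope.

Definition Cx : Type := complex Rdefinitions.R.
HB.instance Definition _ := GRing.ClosedField.on Cx.

(* Lambda(M): a duplicate-free list of the distinct eigenvalues of M
   (chosen classically; it exists since the spectrum is finite). *)
Definition spectrum (n : nat) (M : 'M[Cx]_n) : seq Cx :=
  match excluded_middle_informative
          (exists s : seq Cx, uniq s /\ forall a, a \in s <-> eigenvalue M a) with
  | left H => proj1_sig (constructive_indefinite_description _ H)
  | right _ => [::]
  end.

Definition geom_mult (n : nat) (M : 'M[Cx]_n) (a : Cx) : nat :=
  \rank (eigenspace M a).

Definition derog_index (n : nat) (M : 'M[Cx]_n) : nat :=
  \sum_(a <- spectrum M) (geom_mult M a - 1)%N.

(* Main.v *)
Require Import Defs.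
From mathcomp Require Import all_boot all_order all_algebra.
From Stdlib Require Import ClassicalEpsilon.
From mathcomp Require Import zify.
Set Implicit Arguments. Unset Strict Implicit.
Import GRing.Theory Num.Theory.
Local Open Scope ring_scope.

Lemma spec_exists (n : nat) (M : 'M[Cx]_n) :
  exists s : seq Cx, uniq s /\ forall a, a \in s <-> eigenvalue M a.
Proof.
have [r Hr] := closed_field_poly_normal (char_poly M).
exists (undup r); split; first exact: undup_uniq.
move=> a; rewrite mem_undup eigenvalue_root_char Hr.
rewrite (monicP (char_poly_monic M)) scale1r root_prod_XsubC; by [].
Qed.

Lemma spec_prop (n : nat) (M : 'M[Cx]_n) :
  uniq (spectrum M) /\ forall a, a \in spectrum M <-> eigenvalue M a.
Proof.
rewrite /spectrum; case: excluded_middle_informative => [H|H].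
  by case: (constructive_indefinite_description _ H).
by exfalso; apply: H; apply: spec_exists.
Qed.

Lemma gm_out (n : nat) (M : 'M[Cx]_n) a :
  a \notin spectrum M -> geom_mult M a = 0%N.
Proof.
move=> Ha; have [_ H] := spec_prop M.
apply/eqP; rewrite /geom_mult mxrank_eq0.
apply/negPn/negP => He; apply/negP: Ha; rewrite negbK; apply/H; exact: He.
Qed.

Lemma gm_bound (n : nat) (A B : 'M[Cx]_n) a :
  (geom_mult A a <= geom_mult (A + B) a + \rank B)%N.
Proof.
rewrite /geom_mult /eigenspace !mxrank_ker.
have E : A + B - a%:M = (A - a%:M) + B by rewrite addrAC.
rewrite E.
have h2 : (\rank (A - a%:M + B)%R <= addn (\rank (A - a%:M)%R) (\rank B))%N.
  exact: mxrank_add.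
have h1 : (\rank (A - a%:M)%R <= n)%N := rank_leq_row _.
have h3 : (\rank (A - a%:M + B)%R <= n)%N := rank_leq_row _.
move: h1 h2 h3; move: (\rank (A - a%:M)%R) (\rank (A - a%:M + B)%R) (\rank B) => x y z.
lia.
Qed.

Lemma sum_sub (t s : seq Cx) (f : Cx -> nat) :
  uniq s -> uniq t -> (forall a, a \notin t -> f a = 0%N) ->
  (\sum_(a <- s) f a <= \sum_(a <- t) f a)%N.
Proof.
move=> us ut Hf.
rewrite (bigID (fun a => a \in t)) /= [X in (_ + X)%N]big1 ?addn0; last first.
  by move=> a /Hf.
rewrite -big_filter.
rewrite [X in (_ <= X)%N](bigID (fun a => a \in s)) /=.
apply: leq_trans (leq_addr _ _).
rewrite -[X in (_ <= X)%N]big_filter.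
rewrite (perm_big [seq a <- t | a \in s]) //.
apply: uniq_perm; rewrite ?filter_uniq // => a; rewrite !mem_filter andbC.
by [].
Qed.

Lemma sum_plus_const (s : seq Cx) (f : Cx -> nat) (c : nat) :
  (\sum_(a <- s) (f a + c) = \sum_(a <- s) f a + c * size s)%N.
Proof.
elim: s => [|x s IH]; first by rewrite !big_nil muln0.
rewrite !big_cons IH /=; lia.
Qed.

Lemma key_gen (s t : seq Cx) (g h : Cx -> nat) (r : nat) :
  uniq s -> uniq t -> (forall a, a \notin t -> h a = 0%N) ->
  (forall a, g a <= h a + r)%N ->
  (\sum_(a <- s) (g a - 1) <= \sum_(a <- t) (h a - 1) + r * size s)%N.
Proof.
move=> us ut H0 Hgh.
apply: (@leq_trans (\sum_(a <- s) ((h a - 1) + r))%N).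
  by apply: leq_sum => a _; have := Hgh a; lia.
rewrite sum_plus_const leq_add2r.
apply: (sum_sub (f := fun a => (h a - 1)%N) us ut) => a Ha.
by rewrite (H0 a Ha).
Qed.

Lemma derog_eq (n : nat) (M : 'M[Cx]_n) :
  derog_index M = (\sum_(a <- spectrum M) (geom_mult M a - 1))%N.
Proof. by []. Qed.

Theorem corollary4p1 (n : nat) (A B : 'M[Cx]_n) :
  let C := A + B in
  ((derog_index A)%:Z - (\rank B * size (spectrum A))%:Z <= (derog_index C)%:Z)%R.
Proof.
cbv zeta; set C := A + B.
have [uA _] := spec_prop A; have [uC _] := spec_prop C.
have key : (derog_index A <= derog_index C + \rank B * size (spectrum A))%N.
  rewrite !derog_eq.
  apply: (@key_gen (spectrum A) (spectrum C) (geom_mult A) (geom_mult C) (\rank B) uA uC).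
    by move=> a Ha; apply: gm_out.
  by move=> a; apply: gm_bound.
rewrite lerBlDr -PoszD lez_nat; exact: key.
Qed.
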